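(* Let $0<q\le1\le p\le2$, let $A\in\mathbb{R}^{m\times n}$, let $\bar{x}\in\mathbb{R}^n$ have exactly $S\ge1$ nonzero groups, set $b:=A\bar{x}$, and suppose the $(p,q)$-GREC$(S,S)$ holds. Let $K$ be the smallest integer with $2^{K-1}q\ge1$ and let $\lambda>0$. Then for every $x^*\in{\rm lev}_F(\bar{x}):=\{x:\|Ax-b\|_2^2+\lambda\|x\|_{p,q}^q\le\lambda\|\bar{x}\|_{p,q}^q\}$, $$\|x^*-\bar{x}\|_2^2\le 2\lambda^{\frac{2}{2-q}}S^{\frac{q-2}{q}+(1-2^{-K})\frac{4}{q(2-q)}}\big/\phi_{p,q}^{\frac{4}{2-q}}(S,S).$$ Moreover, the exponent $e:=\frac{q-2}{q}+(1-2^{-K})\frac{4}{q(2-q)}$ satisfies $e=1$ if $2^{K-1}q=1$ and $e<\frac{3-q}{2-q}$ if $2^{K-1}q>1$; hence $\|x^*-\bar{x}\|_2^2=O(\lambda^{\frac{2}{2-q}}S)$ in the first case and $O(\lambda^{\frac{2}{2-q}}S^{\frac{3-q}{2-q}})$ in the second, with constant $2/\phi_{p,q}^{4/(2-q)}(S,S)$.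
   Context: Group structure: $\{1,\dots,n\}$ is partitioned into disjoint nonempty index sets $\mathcal{G}_1,\dots,\mathcal{G}_r$; $x_{\mathcal{G}_i}$ is the subvector indexed by $\mathcal{G}_i$. For $\mathcal{J}\subseteq\{1,\dots,r\}$, $\|x_{\mathcal{G}_{\mathcal{J}}}\|_{p,q}:=(\sum_{i\in\mathcal{J}}\|x_{\mathcal{G}_i}\|_p^q)^{1/q}$ and $\|x\|_{p,q}:=\|x_{\mathcal{G}_{\{1,\dots,r\}}}\|_{p,q}$. A group $i$ is nonzero if $x_{\mathcal{G}_i}\ne0$. For $\mathcal{J}\subseteq\{1,\dots,r\}$ and integer $N$, $\mathcal{J}(x;N)$ is the set of the $N$ indices $i\in\mathcal{J}^c$ with the largest $\|x_{\mathcal{G}_i}\|_p$ (ties broken arbitrarily). Group restricted eigenvalue: $\phi_{p,q}(S,N):=\inf\{\|Ax\|_2/\|x_{\mathcal{G}_{\mathcal{N}}}\|_{p,2}: x\ne0,\ |\mathcal{J}|\le S,\ \|x_{\mathcal{G}_{\mathcal{J}^c}}\|_{p,q}\le\|x_{\mathcal{G}_{\mathcal{J}}}\|_{p,q},\ \mathcal{N}=\mathcal{J}(x;N)\cup\mathcal{J}\}$; the $(p,q)$-GREC$(S,N)$ holds if $\phi_{p,q}(S,N)>0$. *)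

(* Defs.v *)
From Stdlib Require Import Reals Lra Lia Bool.
Open Scope R_scope.

(* Power with real exponent; 0 (and nonpositive bases) map to 0.
   Only used with positive exponents, where 0^y = 0 is the right convention. *)
Definition rpow (x y : R) : R := if Rle_dec x 0 then 0 else Rpower x y.

Fixpoint sumR (k : nat) (f : nat -> R) : R :=
  match k with O => 0 | Datatypes.S k' => sumR k' f + f k' end.

Fixpoint countb (k : nat) (b : nat -> bool) : nat :=
  match k with O => O | Datatypes.S k' => (countb k' b + (if b k' then 1 else 0))%nat end.

Fixpoint anyb (k : nat) (b : nat -> bool) : bool :=
  match k with O => false | Datatypes.S k' => anyb k' b || b k' end.

Definition Rnzb (a : R) : bool := if Req_EM_T a 0 then false else true.

(* Vectors in R^n are functions nat -> R (entries j < n); matrices in R^{m x n}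
   are functions nat -> nat -> R (entries k < m, j < n).
   The group structure: grp j is the index of the group containing coordinate j;
   groups are 0..r-1 (see hypotheses of the theorem). *)

Definition gnorm (n : nat) (grp : nat -> nat) (p : R) (x : nat -> R) (i : nat) : R :=
  rpow (sumR n (fun j => if Nat.eqb (grp j) i then rpow (Rabs (x j)) p else 0)) (/ p).

Definition gnormJ (n : nat) (grp : nat -> nat) (r : nat) (p q : R)
  (J : nat -> bool) (x : nat -> R) : R :=
  rpow (sumR r (fun i => if J i then rpow (gnorm n grp p x i) q else 0)) (/ q).

Definition gnorm_full n grp r p q x : R := gnormJ n grp r p q (fun _ => true) x.

Definition matvec (n : nat) (A : nat -> nat -> R) (x : nat -> R) : nat -> R :=
  fun k => sumR n (fun j => A k j * x j).

Definition l2 (m : nat) (v : nat -> R) : R := sqrt (sumR m (fun k => v k ^ 2)).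

Definition grp_nz (n : nat) (grp : nat -> nat) (x : nat -> R) (i : nat) : bool :=
  anyb n (fun j => Nat.eqb (grp j) i && Rnzb (x j)).

(* T = J(x;N): the N indices of J^c (within {0..r-1}) with the largest
   ||x_{G_i}||_p, ties broken arbitrarily (all choices allowed); if J^c has
   fewer than N elements, T = J^c. *)
Definition top_set n grp r p (x : nat -> R) (J : nat -> bool) (N : nat)
  (T : nat -> bool) : Prop :=
  (forall i, T i = true -> (i < r)%nat /\ J i = false) /\
  countb r T = Nat.min N (r - countb r J)%nat /\
  (forall i j, (i < r)%nat -> (j < r)%nat -> T i = true -> J j = false ->
      T j = false -> gnorm n grp p x j <= gnorm n grp p x i).

(* the set whose infimum is phi_{p,q}(S,N) *)
Definition phi_set (m n : nat) (grp : nat -> nat) (r : nat) (A : nat -> nat -> R)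
  (p q : R) (S N : nat) : R -> Prop :=
  fun v => exists (x : nat -> R) (J T : nat -> bool),
    (exists j, (j < n)%nat /\ x j <> 0) /\
    (countb r J <= S)%nat /\
    gnormJ n grp r p q (fun i => negb (J i)) x <= gnormJ n grp r p q J x /\
    top_set n grp r p x J N T /\
    v = l2 m (matvec n A x) / gnormJ n grp r p 2 (fun i => J i || T i) x.

Definition is_glb (E : R -> Prop) (l : R) : Prop :=
  (forall v, E v -> l <= v) /\ (forall l', (forall v, E v -> l' <= v) -> l' <= l).

(* Main.v *)
Require Import Defs.
From Stdlib Require Import Reals Bool Lra Lia.
Open Scope R_scope.

Lemma Rpower_pos x y : 0 < Rpower x y.
Proof. unfold Rpower; apply exp_pos. Qed.

Lemma rpow_0 y : rpow 0 y = 0.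
Proof. unfold rpow; destruct (Rle_dec 0 0); [reflexivity| lra]. Qed.

Lemma rpow_pos_eq x y : 0 < x -> rpow x y = Rpower x y.
Proof. intro H; unfold rpow; destruct (Rle_dec x 0); [lra|reflexivity]. Qed.

Lemma rpow_ge0 x y : 0 <= rpow x y.
Proof. unfold rpow; destruct (Rle_dec x 0); [lra| left; apply Rpower_pos]. Qed.

Lemma rpow_gt0 x y : 0 < x -> 0 < rpow x y.
Proof. intro H; rewrite rpow_pos_eq by exact H; apply Rpower_pos. Qed.

Lemma rpow_1 x : 0 <= x -> rpow x 1 = x.
Proof. intros [H|H]. rewrite rpow_pos_eq by exact H; apply Rpower_1; exact H.
  subst; apply rpow_0. Qed.

Lemma rpow_le x y a : 0 <= a -> 0 <= x <= y -> rpow x a <= rpow y a.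
Proof. intros Ha [[Hx|Hx] Hxy].
  rewrite !rpow_pos_eq by lra. apply Rle_Rpower_l; lra.
  subst; rewrite rpow_0; apply rpow_ge0. Qed.

Lemma rpow_lt x y a : 0 < a -> 0 <= x < y -> rpow x a < rpow y a.
Proof. intros Ha [[Hx|Hx] Hxy].
  rewrite !rpow_pos_eq by lra. apply Rlt_Rpower_l; lra.
  subst; rewrite rpow_0; apply rpow_gt0; lra. Qed.

Lemma rpow_mult x a b : 0 <= x -> rpow (rpow x a) b = rpow x (a*b).
Proof. intros [Hx|Hx].
  rewrite (rpow_pos_eq x a) by exact Hx. rewrite rpow_pos_eq by apply Rpower_pos.
  rewrite rpow_pos_eq by exact Hx. apply Rpower_mult.
  subst; rewrite !rpow_0; reflexivity. Qed.

Lemma rpow_mul x y a : 0 <= x -> 0 <= y -> rpow (x*y) a = rpow x a * rpow y a.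
Proof. intros [Hx|Hx] [Hy|Hy].
  rewrite !rpow_pos_eq by nra. symmetry; apply Rpower_mult_distr; lra.
  subst; rewrite Rmult_0_r, !rpow_0; ring.
  subst; rewrite Rmult_0_l, !rpow_0; ring.
  subst; rewrite Rmult_0_l, !rpow_0; ring. Qed.

Lemma rpow_plus x a b : 0 < x -> rpow x (a+b) = rpow x a * rpow x b.
Proof. intro H; rewrite !rpow_pos_eq by exact H; apply Rpower_plus. Qed.

Lemma rpow_inv x a : 0 < x -> rpow (/x) a = / rpow x a.
Proof. intro H. rewrite !rpow_pos_eq by (try apply Rinv_0_lt_compat; exact H).
  unfold Rpower. rewrite ln_Rinv by exact H. rewrite <- exp_Ropp. f_equal; ring. Qed.

Lemma rpow_2 x : 0 <= x -> rpow x 2 = x^2.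
Proof. intros [H|H]. rewrite rpow_pos_eq by exact H.
  replace 2 with (INR 2) by (simpl; ring). apply Rpower_pow; exact H.
  subst; rewrite rpow_0; ring. Qed.

Lemma rpow_0_r x : 0 < x -> rpow x 0 = 1.
Proof. intro H; rewrite rpow_pos_eq by exact H; apply Rpower_O; exact H. Qed.

Lemma exp_le_mono x y : x <= y -> exp x <= exp y.
Proof. intros [H|H]. left; apply exp_increasing; exact H. subst; lra. Qed.

Lemma rpow_exp_le x a b : 1 <= x -> a <= b -> rpow x a <= rpow x b.
Proof. intros H1 H2. rewrite !rpow_pos_eq by lra. apply Rle_Rpower; lra. Qed.

Lemma ln_le0 x : 0 < x <= 1 -> ln x <= 0.
Proof. intros [H1 [H2|H2]]. left; rewrite <- ln_1; apply ln_increasing; lra.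
  subst; rewrite ln_1; lra. Qed.

Lemma rpow_base_le1 x a b : 0 <= x <= 1 -> 0 < a <= b -> rpow x b <= rpow x a.
Proof. intros [[H0|H0] H1] Hab.
  rewrite !rpow_pos_eq by lra. unfold Rpower. apply exp_le_mono.
  pose proof (ln_le0 x (conj H0 H1)). nra.
  subst; rewrite !rpow_0; lra. Qed.

Lemma ln_le_sub1 z : 0 < z -> ln z <= z - 1.
Proof. intro H. pose proof (exp_ineq1_le (ln z)). rewrite exp_ln in H0 by exact H. lra. Qed.

Lemma bern_c a y : 0 < a <= 1 -> 0 <= y -> rpow y a <= 1 + a*(y-1).
Proof. intros Ha [Hy|Hy].
  2:{ subst; rewrite rpow_0; lra. }
  rewrite rpow_pos_eq by exact Hy. unfold Rpower.
  set (m := a*y + 1 - a). assert (Hm : 0 < m) by (unfold m; nra).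
  assert (H1 := ln_le_sub1 (y/m) ltac:(apply Rdiv_lt_0_compat; lra)).
  assert (H2 := ln_le_sub1 (/m) ltac:(apply Rinv_0_lt_compat; lra)).
  unfold Rdiv in H1. rewrite ln_mult in H1 by (try apply Rinv_0_lt_compat; lra).
  rewrite ln_Rinv in H1, H2 by lra.
  assert (a * ln y <= ln m).
  { assert (E: a * (y * / m - 1) + (1 - a) * (/ m - 1) = 0).
    { unfold m in *. field. lra. }
    nra. }
  replace (1 + a*(y-1)) with m by (unfold m; ring).
  rewrite <- (exp_ln m) by exact Hm. apply exp_le_mono; exact H. Qed.

Lemma bern_v p y : 1 <= p -> 0 <= y -> 1 + p*(y-1) <= rpow y p.
Proof. intros Hp Hy.
  pose proof (bern_c (/p) (rpow y p) ltac:(split; [apply Rinv_0_lt_compat; lra|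
     rewrite <- Rinv_1; apply Rinv_le_contravar; lra]) (rpow_ge0 _ _)).
  rewrite rpow_mult in H by exact Hy. rewrite Rinv_r in H by lra.
  rewrite rpow_1 in H by exact Hy.
  assert (p * y <= p * (1 + / p * (rpow y p - 1))) by (apply Rmult_le_compat_l; lra).
  replace (p * (1 + / p * (rpow y p - 1))) with (p + rpow y p - 1) in H0 by (field; lra).
  lra. Qed.
Lemma Rdiv_le_0_compat a b : 0 <= a -> 0 < b -> 0 <= a/b.
Proof. intros; unfold Rdiv; apply Rmult_le_pos; [lra| left; apply Rinv_0_lt_compat; lra]. Qed.
Lemma Rdiv_le_1 a b : 0 < b -> a <= b -> a/b <= 1.
Proof. intros; unfold Rdiv. replace 1 with (b * / b) by (field; lra).
  apply Rmult_le_compat_r; [left; apply Rinv_0_lt_compat|]; lra. Qed.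
Ltac dpos := first [lra | apply Rdiv_le_0_compat; lra | apply Rdiv_lt_0_compat; lra].

Lemma tang_v p c t : 1 <= p -> 0 < c -> 0 <= t ->
  rpow c p * (1 + p*(t/c - 1)) <= rpow t p.
Proof. intros Hp Hc Ht.
  replace t with (c * (t/c)) at 2 by (field; lra).
  rewrite rpow_mul by dpos.
  apply Rmult_le_compat_l. apply rpow_ge0. apply bern_v; [lra|]. apply Rdiv_le_0_compat; lra. Qed.

Lemma tang_c a c u : 0 < a <= 1 -> 0 < c -> 0 <= u ->
  rpow u a <= rpow c a * (1 + a*(u/c - 1)).
Proof. intros Ha Hc Hu.
  replace u with (c * (u/c)) at 1 by (field; lra).
  rewrite rpow_mul by dpos.
  apply Rmult_le_compat_l. apply rpow_ge0. apply bern_c; [lra|]. apply Rdiv_le_0_compat; lra. Qed.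

Lemma convex_pow p al u v : 1 <= p -> 0 <= al <= 1 -> 0 <= u -> 0 <= v ->
  rpow (al*u + (1-al)*v) p <= al * rpow u p + (1-al) * rpow v p.
Proof. intros Hp Hal Hu Hv.
  set (mm := al*u + (1-al)*v). assert (0 <= mm) by (unfold mm; nra).
  destruct H as [H|H].
  - pose proof (tang_v p mm u Hp H Hu). pose proof (tang_v p mm v Hp H Hv).
    assert (E: al * (rpow mm p * (1 + p * (u / mm - 1))) + (1-al) * (rpow mm p * (1 + p * (v / mm - 1))) = rpow mm p).
    { unfold mm at 2 4. field. fold mm. lra. }
    pose proof (rpow_ge0 u p). nra.
  - rewrite <- H, rpow_0. pose proof (rpow_ge0 u p). pose proof (rpow_ge0 v p). nra. Qed.

Lemma subadd_pow q u v : 0 < q <= 1 -> 0 <= u -> 0 <= v ->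
  rpow (u+v) q <= rpow u q + rpow v q.
Proof. intros Hq Hu Hv. destruct (Req_dec (u+v) 0) as [E|E].
  { rewrite E, rpow_0. pose proof (rpow_ge0 u q). pose proof (rpow_ge0 v q). lra. }
  assert (Hs: 0 < u + v) by lra.
  assert (forall w, 0 <= w <= u+v -> rpow (u+v) q * (w/(u+v)) <= rpow w q).
  { intros w Hw. replace w with ((u+v) * (w/(u+v))) at 2 by (field; lra).
    rewrite rpow_mul by dpos.
    apply Rmult_le_compat_l. apply rpow_ge0.
    rewrite <- (rpow_1 (w/(u+v))) at 1 by (apply Rdiv_le_0_compat; lra).
    apply rpow_base_le1; [|lra]. split. apply Rdiv_le_0_compat; lra.
    apply Rdiv_le_1; lra. }
  pose proof (H u ltac:(lra)). pose proof (H v ltac:(lra)).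
  assert (rpow (u + v) q * (u / (u + v)) + rpow (u + v) q * (v / (u + v)) = rpow (u+v) q) by (field; lra).
  lra. Qed.

Lemma sumR_ext k f g : (forall i, (i < k)%nat -> f i = g i) -> sumR k f = sumR k g.
Proof. induction k; simpl; intros H. reflexivity. rewrite IHk by (intros; apply H; lia).
  rewrite H by lia. reflexivity. Qed.

Lemma sumR_le k f g : (forall i, (i < k)%nat -> f i <= g i) -> sumR k f <= sumR k g.
Proof. induction k; simpl; intros H. lra. pose proof (IHk ltac:(intros; apply H; lia)).
  pose proof (H k ltac:(lia)). lra. Qed.

Lemma sumR_plus k f g : sumR k (fun i => f i + g i) = sumR k f + sumR k g.
Proof. induction k; simpl. ring. rewrite IHk; ring. Qed.

Lemma sumR_scal k c f : sumR k (fun i => c * f i) = c * sumR k f.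
Proof. induction k; simpl. ring. rewrite IHk; ring. Qed.

Lemma sumR_nonneg k f : (forall i, (i < k)%nat -> 0 <= f i) -> 0 <= sumR k f.
Proof. intro H. assert (E: sumR k (fun _ => 0) = 0).
  { clear; induction k; simpl; [ring| rewrite IHk; ring]. }
  rewrite <- E. apply sumR_le; exact H. Qed.

Lemma sumR_zero k f : (forall i, (i < k)%nat -> 0 <= f i) -> sumR k f = 0 ->
  forall i, (i < k)%nat -> f i = 0.
Proof. induction k; simpl; intros H E i Hi. lia.
  assert (0 <= sumR k f) by (apply sumR_nonneg; intros; apply H; lia).
  assert (0 <= f k) by (apply H; lia).
  destruct (Nat.eq_dec i k). subst; lra.
  apply IHk; [intros; apply H; lia| lra| lia]. Qed.

Lemma sumR_swap a b (f : nat -> nat -> R) :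
  sumR a (fun i => sumR b (fun j => f i j)) = sumR b (fun j => sumR a (fun i => f i j)).
Proof. induction a; simpl. symmetry; clear; induction b; simpl; [ring| rewrite IHb; ring].
  rewrite IHa. rewrite <- sumR_plus. reflexivity. Qed.

Lemma sumR_count k (T : nat -> bool) c :
  sumR k (fun i => if T i then c else 0) = INR (countb k T) * c.
Proof. induction k; simpl. ring. rewrite IHk, plus_INR. destruct (T k); simpl; ring. Qed.

Lemma sumR_split k (b : nat -> bool) f :
  sumR k f = sumR k (fun i => if b i then f i else 0) + sumR k (fun i => if b i then 0 else f i).
Proof. rewrite <- sumR_plus. apply sumR_ext. intros i _. destruct (b i); ring. Qed.

Lemma sumR_ifle k (b : nat -> bool) f : (forall i, (i < k)%nat -> 0 <= f i) ->
  sumR k (fun i => if b i then f i else 0) <= sumR k f.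
Proof. intro H; apply sumR_le; intros i Hi; destruct (b i); [lra| apply H; exact Hi]. Qed.

Definition psum n (w : nat -> bool) p (f : nat -> R) :=
  sumR n (fun j => if w j then rpow (Rabs (f j)) p else 0).

Lemma psum_ge0 n w p f : 0 <= psum n w p f.
Proof. apply sumR_nonneg; intros; destruct (w i); [apply rpow_ge0| lra]. Qed.

Lemma psum_mono n w p f g : 0 <= p ->
  (forall j, (j < n)%nat -> w j = true -> Rabs (f j) <= Rabs (g j)) ->
  psum n w p f <= psum n w p g.
Proof. intros Hp H. apply sumR_le; intros j Hj. destruct (w j) eqn:E; [|lra].
  apply rpow_le; [lra|]. split; [apply Rabs_pos| apply H; auto]. Qed.

Lemma psum_zero n w p f : psum n w p f = 0 ->
  forall j, (j < n)%nat -> w j = true -> f j = 0.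
Proof. intros E j Hj Hw. pose proof (sumR_zero n (fun j => if w j then rpow (Rabs (f j)) p else 0) ltac:(intros; cbv beta; destruct (w i); [apply rpow_ge0|lra]) E j Hj).
  simpl in H. rewrite Hw in H. destruct (Req_dec (f j) 0) as [|N]; [assumption|].
  exfalso. assert (0 < Rabs (f j)) by (apply Rabs_pos_lt; exact N).
  pose proof (rpow_gt0 _ p H0). lra. Qed.

Lemma rpow_inv_p x p : 0 <= x -> p <> 0 -> rpow (rpow x (/p)) p = x.
Proof. intros Hx Hp. rewrite rpow_mult by exact Hx. rewrite Rinv_l by exact Hp. apply rpow_1; exact Hx. Qed.

Lemma rpow_p_inv x p : 0 <= x -> p <> 0 -> rpow (rpow x p) (/p) = x.
Proof. intros Hx Hp. rewrite rpow_mult by exact Hx. rewrite Rinv_r by exact Hp. apply rpow_1; exact Hx. Qed.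

Lemma mink_zero n w p f g h : 0 <= p -> psum n w p f = 0 ->
  (forall j, (j < n)%nat -> w j = true -> Rabs (h j) <= Rabs (f j) + Rabs (g j)) ->
  psum n w p h <= psum n w p g.
Proof. intros Hp E H. apply psum_mono; [exact Hp|]. intros j Hj Hw.
  pose proof (H j Hj Hw). rewrite (psum_zero _ _ _ _ E j Hj Hw), Rabs_R0 in H0. lra. Qed.

Lemma minkowski n w p f g h : 1 <= p ->
  (forall j, (j < n)%nat -> w j = true -> Rabs (h j) <= Rabs (f j) + Rabs (g j)) ->
  rpow (psum n w p h) (/p) <= rpow (psum n w p f) (/p) + rpow (psum n w p g) (/p).
Proof. intros Hp H.
  assert (Hip : 0 < /p) by (apply Rinv_0_lt_compat; lra).
  pose proof (psum_ge0 n w p f) as HF. pose proof (psum_ge0 n w p g) as HG.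
  destruct HF as [HF|HF].
  2:{ rewrite <- HF, rpow_0, Rplus_0_l. apply rpow_le; [lra|]. split; [apply psum_ge0|].
      apply (mink_zero n w p f g h); [lra| auto| exact H]. }
  destruct HG as [HG|HG].
  2:{ rewrite <- HG, rpow_0, Rplus_0_r. apply rpow_le; [lra|]. split; [apply psum_ge0|].
      apply (mink_zero n w p g f h); [lra| auto|]. intros; rewrite Rplus_comm; auto. }
  set (F := psum n w p f) in *. set (G := psum n w p g) in *.
  set (A := rpow F (/p)). set (B := rpow G (/p)).
  assert (HA: 0 < A) by (apply rpow_gt0; exact HF).
  assert (HB: 0 < B) by (apply rpow_gt0; exact HG).
  assert (HAp: rpow A p = F) by (apply rpow_inv_p; lra).
  assert (HBp: rpow B p = G) by (apply rpow_inv_p; lra).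
  set (al := A/(A+B)). assert (Hal: 0 <= al <= 1).
  { unfold al; split; [apply Rdiv_le_0_compat; lra| apply Rdiv_le_1; lra]. }
  set (C := rpow (A+B) p).
  assert (Hterm: forall j, (j < n)%nat ->
     (if w j then rpow (Rabs (h j)) p else 0) <=
     (C * al / F) * (if w j then rpow (Rabs (f j)) p else 0) +
     (C * (1-al) / G) * (if w j then rpow (Rabs (g j)) p else 0)).
  { intros j Hj. destruct (w j) eqn:Ew; [|lra].
    pose proof (H j Hj Ew) as Hh.
    set (x := Rabs (f j)/A). set (y := Rabs (g j)/B).
    assert (Hx: 0 <= x) by (unfold x; apply Rdiv_le_0_compat; [apply Rabs_pos|lra]).
    assert (Hy: 0 <= y) by (unfold y; apply Rdiv_le_0_compat; [apply Rabs_pos|lra]).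
    assert (E1: Rabs (f j) + Rabs (g j) = (A+B) * (al*x + (1-al)*y)) by (unfold al, x, y; field; lra).
    assert (Hm: 0 <= al * x + (1-al)*y) by nra.
    apply Rle_trans with (rpow ((A+B) * (al*x + (1-al)*y)) p).
    { apply rpow_le; [lra|]. split; [apply Rabs_pos| lra]. }
    rewrite rpow_mul by lra. fold C.
    pose proof (convex_pow p al x y Hp Hal Hx Hy).
    assert (Ex: rpow x p = rpow (Rabs (f j)) p / F).
    { unfold x, Rdiv. rewrite rpow_mul by (try apply Rabs_pos; left; apply Rinv_0_lt_compat; lra).
      rewrite rpow_inv by lra. rewrite HAp. reflexivity. }
    assert (Ey: rpow y p = rpow (Rabs (g j)) p / G).
    { unfold y, Rdiv. rewrite rpow_mul by (try apply Rabs_pos; left; apply Rinv_0_lt_compat; lra).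
      rewrite rpow_inv by lra. rewrite HBp. reflexivity. }
    rewrite Ex, Ey in H0.
    assert (0 <= C) by apply rpow_ge0.
    apply Rle_trans with (C * (al * (rpow (Rabs (f j)) p / F) + (1 - al) * (rpow (Rabs (g j)) p / G))).
    { apply Rmult_le_compat_l; assumption. }
    right. unfold Rdiv. ring. }
  assert (Hsum: psum n w p h <= C).
  { apply Rle_trans with (sumR n (fun j => (C * al / F) * (if w j then rpow (Rabs (f j)) p else 0) +
     (C * (1-al) / G) * (if w j then rpow (Rabs (g j)) p else 0))).
    { apply sumR_le; exact Hterm. }
    rewrite sumR_plus, !sumR_scal. fold (psum n w p f) (psum n w p g). fold F G.
    right. field. lra. }
  apply Rle_trans with (rpow C (/p)).
  { apply rpow_le; [lra|]. split; [apply psum_ge0| exact Hsum]. }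
  unfold C. right. apply rpow_p_inv; lra. Qed.

Lemma term_le_sum k g j : (forall i, (i < k)%nat -> 0 <= g i) -> (j < k)%nat -> g j <= sumR k g.
Proof. induction k; simpl; intros H Hj. lia.
  assert (0 <= sumR k g) by (apply sumR_nonneg; intros; apply H; lia).
  destruct (Nat.eq_dec j k). subst. lra.
  pose proof (IHk ltac:(intros; apply H; lia) ltac:(lia)). pose proof (H k ltac:(lia)). lra. Qed.

Lemma l2_le_lp n (w : nat -> bool) p (f : nat -> R) : 1 <= p <= 2 ->
  sumR n (fun j => if w j then f j ^ 2 else 0) <= rpow (rpow (psum n w p f) (/p)) 2.
Proof. intros Hp.
  pose proof (psum_ge0 n w p f) as [HP|HP].
  2:{ rewrite <- HP, rpow_0, rpow_0. right. transitivity (sumR n (fun _ => 0)).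
      apply sumR_ext. intros j Hj. destruct (w j) eqn:E; [|reflexivity].
      rewrite (psum_zero n w p f (eq_sym HP) j Hj E). ring.
      clear; induction n; simpl; [ring| rewrite IHn; ring]. }
  set (P := psum n w p f) in *. set (N := rpow P (/p)).
  assert (HN: 0 < N) by (apply rpow_gt0; exact HP).
  assert (HNp: rpow N p = P) by (apply rpow_inv_p; lra).
  assert (Hterm: forall j, (j < n)%nat -> (if w j then f j ^ 2 else 0) <=
       (rpow N 2 / P) * (if w j then rpow (Rabs (f j)) p else 0)).
  { intros j Hj. destruct (w j) eqn:E; [|lra].
    assert (Hle: rpow (Rabs (f j)) p <= P).
    { pose proof (term_le_sum n (fun j => if w j then rpow (Rabs (f j)) p else 0) j
         ltac:(intros; cbv beta; destruct (w i); [apply rpow_ge0|lra]) Hj). simpl in H. rewrite E in H. exact H. }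
    assert (HfN: Rabs (f j) <= N).
    { destruct (Rle_lt_dec (Rabs (f j)) N) as [|Hc]; [assumption|].
      pose proof (rpow_lt N (Rabs (f j)) p ltac:(lra) ltac:(lra)). lra. }
    set (z := Rabs (f j) / N).
    assert (Hz: 0 <= z <= 1) by (unfold z; split; [apply Rdiv_le_0_compat; [apply Rabs_pos|lra]| apply Rdiv_le_1; lra]).
    pose proof (rpow_base_le1 z p 2 Hz ltac:(lra)).
    assert (Ez2: rpow z 2 = f j ^ 2 / rpow N 2).
    { rewrite !rpow_2 by lra. unfold z. rewrite <- (pow2_abs (f j)). field. lra. }
    assert (Ezp: rpow z p = rpow (Rabs (f j)) p / P).
    { unfold z, Rdiv. rewrite rpow_mul by (try apply Rabs_pos; left; apply Rinv_0_lt_compat; lra).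
      rewrite rpow_inv by lra. rewrite HNp. reflexivity. }
    rewrite Ez2, Ezp in H.
    assert (0 < rpow N 2) by (apply rpow_gt0; lra).
    apply (Rmult_le_compat_l (rpow N 2)) in H; [|lra].
    replace (rpow N 2 * (f j ^ 2 / rpow N 2)) with (f j ^ 2) in H by (field; lra).
    replace (rpow N 2 / P * rpow (Rabs (f j)) p) with (rpow N 2 * (rpow (Rabs (f j)) p / P)) by (field; lra).
    exact H. }
  apply Rle_trans with (sumR n (fun j => (rpow N 2 / P) * (if w j then rpow (Rabs (f j)) p else 0))).
  { apply sumR_le; exact Hterm. }
  rewrite sumR_scal. fold (psum n w p f). fold P. right. field. lra. Qed.

Lemma countb_le k T : (countb k T <= k)%nat.
Proof. induction k; simpl; [lia| destruct (T k); lia]. Qed.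

Lemma countb_false k : countb k (fun _ => false) = 0%nat.
Proof. induction k; simpl; [reflexivity| rewrite IHk; reflexivity]. Qed.

Lemma cover_or_gap k (T J : nat -> bool) :
  (exists i, (i < k)%nat /\ T i = false /\ J i = false) \/
  (forall i, (i < k)%nat -> T i = true \/ J i = true).
Proof. induction k. right; intros; lia.
  destruct IHk as [[i Hi]|H]. left; exists i; intuition lia.
  destruct (T k) eqn:ET. right; intros i Hi; destruct (Nat.eq_dec i k); [subst; auto| apply H; lia].
  destruct (J k) eqn:EJ. right; intros i Hi; destruct (Nat.eq_dec i k); [subst; auto| apply H; lia].
  left; exists k; auto. Qed.

Lemma cover_count k (T J : nat -> bool) :
  (forall i, (i < k)%nat -> T i = true \/ J i = true) -> (k <= countb k T + countb k J)%nat.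
Proof. induction k; simpl; intros H. lia.
  pose proof (IHk ltac:(intros; apply H; lia)). destruct (H k ltac:(lia)) as [E|E]; rewrite E;
  destruct (T k), (J k); lia. Qed.

Lemma disj_count k (T J : nat -> bool) :
  (forall i, (i < k)%nat -> T i = true -> J i = false) -> (countb k T + countb k J <= k)%nat.
Proof. induction k; simpl; intros Hd. lia.
  pose proof (IHk ltac:(intros i0 Hi0; apply Hd; lia)). pose proof (Hd k ltac:(lia)).
  destruct (T k), (J k); try lia; discriminate (H0 eq_refl). Qed.

Lemma gap_count k (T J : nat -> bool) :
  (forall i, (i < k)%nat -> T i = true -> J i = false) ->
  (exists i, (i < k)%nat /\ T i = false /\ J i = false) ->
  (countb k T + countb k J + 1 <= k)%nat.
Proof. induction k; simpl; intros Hd [i [Hi [HT HJ]]]. lia.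
  destruct (Nat.eq_dec i k).
  - subst. rewrite HT, HJ. pose proof (countb_le k T). pose proof (countb_le k J).
    assert (countb k T + countb k J <= k)%nat by (apply disj_count; intros i0 Hi0; apply Hd; lia).
    lia.
  - pose proof (IHk ltac:(intros i0 Hi0; apply Hd; lia) ltac:(exists i; repeat split; auto; lia)).
    pose proof (Hd k ltac:(lia)). destruct (T k), (J k); try lia; discriminate (H0 eq_refl). Qed.

Lemma argmax k (P : nat -> bool) (v : nat -> R) :
  (exists i, (i < k)%nat /\ P i = true) ->
  exists m, (m < k)%nat /\ P m = true /\ forall j, (j < k)%nat -> P j = true -> v j <= v m.
Proof. induction k; intros [i [Hi HP]]. lia.
  destruct (cover_or_gap k (fun i => negb (P i)) (fun _ => false)) as [[j [Hj [Hn _]]]|Hall].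
  - destruct (IHk ltac:(exists j; split; [lia| destruct (P j); auto])) as [m [Hm [HPm Hmax]]].
    destruct (P k) eqn:Ek.
    + destruct (Rle_lt_dec (v k) (v m)).
      * exists m; repeat split; auto. intros j' Hj' HP'. destruct (Nat.eq_dec j' k); [subst; lra| apply Hmax; auto; lia].
      * exists k; repeat split; auto. intros j' Hj' HP'. destruct (Nat.eq_dec j' k); [subst; lra|].
        pose proof (Hmax j' ltac:(lia) HP'). lra.
    + exists m; repeat split; auto. intros j' Hj' HP'. destruct (Nat.eq_dec j' k); [subst; congruence| apply Hmax; auto; lia].
  - assert (Ek: P k = true).
    { destruct (Nat.eq_dec i k); [subst; auto|]. destruct (Hall i ltac:(lia)) as [E|E]; [|discriminate].
      rewrite HP in E; discriminate. }
    exists k; repeat split; auto. intros j' Hj' HP'. destruct (Nat.eq_dec j' k); [subst; lra|].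
    destruct (Hall j' ltac:(lia)) as [E|E]; [|discriminate]. rewrite HP' in E; discriminate. Qed.

Lemma count_add k (T : nat -> bool) m : T m = false ->
  countb k (fun i => T i || Nat.eqb i m) = (countb k T + (if Nat.ltb m k then 1 else 0))%nat.
Proof. intro Hm. induction k. reflexivity. cbn [countb]. rewrite IHk.
  destruct (Nat.eqb k m) eqn:E.
  - apply Nat.eqb_eq in E; subst. rewrite Hm. cbn [orb].
    destruct (Nat.ltb_spec m m); destruct (Nat.ltb_spec m (S m)); lia.
  - apply Nat.eqb_neq in E. rewrite orb_false_r.
    destruct (Nat.ltb_spec m k); destruct (Nat.ltb_spec m (S k)); lia. Qed.

Lemma top_exists n grp r p x J N : exists T, top_set n grp r p x J N T.
Proof.
  assert (G: forall N', (N' <= Nat.min N (r - countb r J))%nat -> exists T : nat -> bool,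
    (forall i, T i = true -> (i < r)%nat /\ J i = false) /\ countb r T = N' /\
    (forall i j, (i < r)%nat -> (j < r)%nat -> T i = true -> J j = false ->
      T j = false -> gnorm n grp p x j <= gnorm n grp p x i)).
  { induction N' as [|N' IH]; intros HN.
    - exists (fun _ => false). split; [intros; discriminate|]. split; [apply countb_false|].
      intros; discriminate.
    - destruct (IH ltac:(lia)) as [T [Hd [Hc Ht]]].
      destruct (cover_or_gap r T J) as [Hgap|Hcov].
      2:{ exfalso. pose proof (cover_count r T J Hcov). pose proof (countb_le r J). lia. }
      destruct (argmax r (fun i => negb (T i) && negb (J i)) (gnorm n grp p x))
        as [m [Hm [HPm Hmax]]].
      { destruct Hgap as [i [Hi [H1 H2]]]. exists i; split; auto. rewrite H1, H2; reflexivity. }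
      apply andb_true_iff in HPm. destruct HPm as [HTm HJm]. apply negb_true_iff in HTm, HJm.
      exists (fun i => T i || Nat.eqb i m). split; [|split].
      + intros i Hi. apply orb_true_iff in Hi. destruct Hi as [Hi|Hi]; [auto|].
        apply Nat.eqb_eq in Hi; subst; auto.
      + rewrite count_add by exact HTm. replace (Nat.ltb m r) with true by (symmetry; apply Nat.ltb_lt; lia). lia.
      + intros i j Hi Hj HTi HJj HTj. apply orb_false_iff in HTj. destruct HTj as [HTj Hjm].
        apply orb_true_iff in HTi. destruct HTi as [HTi|HTi]. apply Ht; auto.
        apply Nat.eqb_eq in HTi; subst. apply Hmax; auto. rewrite HTj, HJj; reflexivity. }
  destruct (G (Nat.min N (r - countb r J)) (le_n _)) as [T HT]. exists T. exact HT. Qed.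

Lemma sumR_minus k f g : sumR k (fun i => f i - g i) = sumR k f - sumR k g.
Proof. induction k; simpl. ring. rewrite IHk; ring. Qed.

Lemma sum_indicator r g c : (g < r)%nat -> sumR r (fun i => if Nat.eqb g i then c else 0) = c.
Proof. induction r; intros H. lia. simpl. destruct (Nat.eq_dec g r).
  - subst. rewrite Nat.eqb_refl. replace (sumR r (fun i => if Nat.eqb r i then c else 0)) with 0. ring.
    clear. assert (forall k, (k <= r)%nat -> sumR k (fun i => if Nat.eqb r i then c else 0) = 0).
    { induction k; intros; simpl. reflexivity. rewrite IHk by lia.
      replace (Nat.eqb r k) with false by (symmetry; apply Nat.eqb_neq; lia). ring. }
    symmetry; apply H; lia.
  - rewrite IHr by lia. replace (Nat.eqb g r) with false by (symmetry; apply Nat.eqb_neq; lia). ring. Qed.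

Lemma regroup n r grp f : (forall j, (j < n)%nat -> (grp j < r)%nat) ->
  sumR n f = sumR r (fun i => sumR n (fun j => if Nat.eqb (grp j) i then f j else 0)).
Proof. intro H. rewrite sumR_swap. apply sumR_ext. intros j Hj. symmetry. apply sum_indicator. auto. Qed.

Lemma anyb_false k b : anyb k b = false -> forall j, (j < k)%nat -> b j = false.
Proof. induction k; simpl; intros H j Hj. lia. apply orb_false_iff in H. destruct H.
  destruct (Nat.eq_dec j k); [subst; auto| apply IHk; auto; lia]. Qed.

Lemma Rnzb_false a : Rnzb a = false -> a = 0.
Proof. unfold Rnzb. destruct (Req_EM_T a 0); [auto| discriminate]. Qed.

Lemma psum_ext n w p f g : (forall j, (j < n)%nat -> w j = true -> Rabs (f j) = Rabs (g j)) ->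
  psum n w p f = psum n w p g.
Proof. intro H. apply sumR_ext. intros j Hj. destruct (w j) eqn:E; [rewrite H by auto|]; reflexivity. Qed.

Lemma psum_0 n w p : psum n w p (fun _ => 0) = 0.
Proof. unfold psum. rewrite Rabs_R0, rpow_0. induction n; simpl; [reflexivity|rewrite IHn; destruct (w n); ring]. Qed.

Lemma rpow_half D : 0 <= D -> rpow D (/2) = sqrt D.
Proof. intros [H|H]. rewrite rpow_pos_eq by exact H. apply Rpower_sqrt; exact H.
  subst; rewrite rpow_0, sqrt_0; reflexivity. Qed.

Lemma gfull_q n grp r p q x : 0 < q ->
  rpow (gnorm_full n grp r p q x) q = sumR r (fun i => rpow (gnorm n grp p x i) q).
Proof. intro Hq. unfold gnorm_full, gnormJ. rewrite rpow_inv_p by (try apply sumR_nonneg; intros; apply rpow_ge0 || lra).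
  reflexivity. Qed.

Lemma power_mean r (J : nat -> bool) (a : nat -> R) q :
  0 < q <= 1 -> (forall i, 0 <= a i) -> 0 < INR (countb r J) ->
  0 < sumR r (fun i => if J i then rpow (a i) 2 else 0) ->
  sumR r (fun i => if J i then rpow (a i) q else 0) <=
  INR (countb r J) * rpow (sumR r (fun i => if J i then rpow (a i) 2 else 0) / INR (countb r J)) (q/2).
Proof. intros Hq Ha Hc HW.
  set (W := sumR r (fun i => if J i then rpow (a i) 2 else 0)) in *.
  set (cn := INR (countb r J)) in *. set (c := W / cn).
  assert (Hcp: 0 < c) by (unfold c; apply Rdiv_lt_0_compat; lra).
  apply Rle_trans with (sumR r (fun i => rpow c (q/2) * (1 - q/2) * (if J i then 1 else 0) +
     (rpow c (q/2) * (q/2) / c) * (if J i then rpow (a i) 2 else 0))).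
  { apply sumR_le. intros i Hi. destruct (J i); [|lra].
    replace (rpow (a i) q) with (rpow (rpow (a i) 2) (q/2))
      by (rewrite rpow_mult by apply Ha; f_equal; field).
    eapply Rle_trans. apply (tang_c (q/2) c (rpow (a i) 2)); [lra| lra| apply rpow_ge0].
    right. field. lra. }
  rewrite sumR_plus, !sumR_scal, sumR_count. fold W. fold cn. unfold c. right. field. split; lra. Qed.

Lemma power_mean0 r (J : nat -> bool) (a : nat -> R) q :
  0 < q -> (forall i, 0 <= a i) ->
  sumR r (fun i => if J i then rpow (a i) 2 else 0) = 0 ->
  sumR r (fun i => if J i then rpow (a i) q else 0) = 0.
Proof. intros Hq Ha HW.
  assert (H := sumR_zero r (fun i => if J i then rpow (a i) 2 else 0) ltac:(intros; cbv beta; destruct (J i); [apply rpow_ge0|lra]) HW).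
  transitivity (sumR r (fun _ => 0)).
  2:{ clear; induction r; simpl; [reflexivity| rewrite IHr; ring]. }
  apply sumR_ext. intros i Hi. specialize (H i Hi). cbv beta in H. destruct (J i); [|reflexivity].
  destruct (Ha i) as [Hp|Hz]. pose proof (rpow_gt0 (a i) 2 Hp). lra.
  rewrite <- Hz, rpow_0. reflexivity. Qed.

Lemma Rabs_sub_le x y : Rabs (x - y) <= Rabs x + Rabs y.
Proof. unfold Rminus. eapply Rle_trans; [apply Rabs_triang| rewrite Rabs_Ropp; lra]. Qed.

Lemma gnorm_psum n grp p x i : gnorm n grp p x i = rpow (psum n (fun j => Nat.eqb (grp j) i) p x) (/p).
Proof. reflexivity. Qed.

Lemma core m n r grp p q A xbar s lam phi xs :
  (forall j, (j < n)%nat -> (grp j < r)%nat) -> 0 < q <= 1 -> 1 <= p <= 2 ->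
  (1 <= s)%nat -> countb r (grp_nz n grp xbar) = s ->
  is_glb (phi_set m n grp r A p q s s) phi -> 0 < phi -> 0 < lam ->
  (l2 m (fun k => matvec n A xs k - matvec n A xbar k))^2 + lam * rpow (gnorm_full n grp r p q xs) q
    <= lam * rpow (gnorm_full n grp r p q xbar) q ->
  (l2 n (fun j => xs j - xbar j))^2 <= 2 * (INR s * (rpow lam (2/(2-q)) / rpow phi (4/(2-q)))).
Proof.
  intros Hgrp Hq Hp Hs Hsupp Hphi Hphi0 Hlam Hlev.
  set (d := fun j => xs j - xbar j).
  set (J0 := grp_nz n grp xbar) in *.
  set (a := fun i => gnorm n grp p d i).
  assert (Ha0: forall i, 0 <= a i) by (intros; apply rpow_ge0).
  set (E := sumR m (fun k => matvec n A d k ^ 2)).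
  assert (HE: l2 m (fun k => matvec n A xs k - matvec n A xbar k) ^2 = E).
  { unfold l2. rewrite pow2_sqrt.
    - apply sumR_ext; intros k Hk. f_equal. unfold matvec. rewrite <- sumR_minus.
      apply sumR_ext; intros j Hj. unfold d; ring.
    - apply sumR_nonneg; intros; apply pow2_ge_0. }
  assert (HE0: 0 <= E) by (apply sumR_nonneg; intros; apply pow2_ge_0).
  set (B := sumR r (fun i => if J0 i then 0 else rpow (a i) q)).
  set (C := sumR r (fun i => if J0 i then rpow (a i) q else 0)).
  assert (HJ0z: forall i j, J0 i = false -> (j < n)%nat -> Nat.eqb (grp j) i = true -> xbar j = 0).
  { intros i j Hi Hj Hg. pose proof (anyb_false _ _ Hi j Hj). cbv beta in H. rewrite Hg in H.
    apply Rnzb_false; exact H. }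
  assert (HBC: E + lam * B <= lam * C).
  { rewrite HE, !gfull_q in Hlev by lra.
    set (X := sumR r (fun i => if J0 i then rpow (gnorm n grp p xs i) q else 0)).
    assert (H1: sumR r (fun i => rpow (gnorm n grp p xs i) q) = X + B).
    { unfold X, B; rewrite <- sumR_plus; apply sumR_ext; intros i Hi. destruct (J0 i) eqn:EJ. ring.
      rewrite Rplus_0_l. f_equal. unfold a. rewrite !gnorm_psum. f_equal. apply psum_ext.
      intros j Hj Hg. unfold d. rewrite (HJ0z i j EJ Hj Hg). f_equal; ring. }
    assert (H2: sumR r (fun i => rpow (gnorm n grp p xbar i) q) <= X + C).
    { unfold X, C; rewrite <- sumR_plus; apply sumR_le; intros i Hi. destruct (J0 i) eqn:EJ.
      - eapply Rle_trans; [|apply subadd_pow; [lra| apply rpow_ge0| apply Ha0]].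
        apply rpow_le; [lra|]. split; [apply rpow_ge0|]. unfold a. rewrite !gnorm_psum.
        apply minkowski; [lra|]. intros j Hj _. unfold d.
        replace (xbar j) with (xs j - (xs j - xbar j)) at 1 by ring. apply Rabs_sub_le.
      - rewrite gnorm_psum. replace (psum n (fun j => Nat.eqb (grp j) i) p xbar) with 0.
        rewrite !rpow_0. lra.
        rewrite <- (psum_0 n (fun j => Nat.eqb (grp j) i) p). apply psum_ext.
        intros j Hj Hg. rewrite (HJ0z i j EJ Hj Hg). reflexivity. }
    rewrite H1 in Hlev. apply (Rmult_le_compat_l lam) in H2; lra. }
  assert (HB0: 0 <= B) by (apply sumR_nonneg; intros; destruct (J0 i); [lra| apply rpow_ge0]).
  assert (HC0: 0 <= C) by (apply sumR_nonneg; intros; destruct (J0 i); [apply rpow_ge0|lra]).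
  assert (HBleC: B <= C) by (apply (Rmult_le_reg_l lam); nra).
  assert (Hrhs: 0 <= 2 * (INR s * (rpow lam (2/(2-q)) / rpow phi (4/(2-q))))).
  { assert (0 < rpow phi (4/(2-q))) by (apply rpow_gt0; lra).
    assert (0 <= rpow lam (2/(2-q))) by apply rpow_ge0. pose proof (pos_INR s).
    assert (0 <= rpow lam (2/(2-q)) / rpow phi (4/(2-q))) by (apply Rdiv_le_0_compat; lra). nra. }
  assert (HL: (l2 n d)^2 = sumR n (fun j => d j ^ 2)).
  { unfold l2. rewrite pow2_sqrt. reflexivity. apply sumR_nonneg; intros; apply pow2_ge_0. }
  rewrite HL.
  destruct (cover_or_gap n (fun j => negb (Rnzb (d j))) (fun _ => false)) as [Hnz|Hz].
  2:{ replace (sumR n (fun j => d j ^ 2)) with 0. exact Hrhs.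
      transitivity (sumR n (fun _ => 0)). clear; induction n; simpl; [reflexivity| rewrite <- IHn; ring].
      apply sumR_ext. intros j Hj. destruct (Hz j Hj) as [H|H]; [|discriminate].
      apply negb_true_iff, Rnzb_false in H. rewrite H; ring. }
  destruct Hnz as [j0 [Hj0 [Hd0 _]]]. apply negb_false_iff in Hd0.
  assert (Hd0': d j0 <> 0).
  { unfold Rnzb in Hd0. destruct (Req_EM_T (d j0) 0); [discriminate|auto]. }
  set (i0 := grp j0). assert (Hi0: (i0 < r)%nat) by (apply Hgrp; exact Hj0).
  assert (Hai0: 0 < a i0).
  { unfold a. rewrite gnorm_psum. apply rpow_gt0.
    eapply Rlt_le_trans; [|apply (term_le_sum n (fun j => if Nat.eqb (grp j) i0 then rpow (Rabs (d j)) p else 0) j0)].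
    - cbv beta. rewrite Nat.eqb_refl. apply rpow_gt0. apply Rabs_pos_lt; exact Hd0'.
    - intros; cbv beta; destruct (Nat.eqb (grp i) i0); [apply rpow_ge0|lra].
    - exact Hj0. }
  assert (Hui0: 0 < rpow (a i0) q) by (apply rpow_gt0; exact Hai0).
  assert (HC: 0 < C).
  { destruct (J0 i0) eqn:EJ.
    - eapply Rlt_le_trans; [|apply (term_le_sum r (fun i => if J0 i then rpow (a i) q else 0) i0)].
      + cbv beta; rewrite EJ; exact Hui0.
      + intros; cbv beta; destruct (J0 i); [apply rpow_ge0|lra].
      + exact Hi0.
    - apply Rlt_le_trans with B; [|exact HBleC].
      eapply Rlt_le_trans; [|apply (term_le_sum r (fun i => if J0 i then 0 else rpow (a i) q) i0)].
      + cbv beta; rewrite EJ; exact Hui0.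
      + intros; cbv beta; destruct (J0 i); [lra|apply rpow_ge0].
      + exact Hi0. }
  set (W := sumR r (fun i => if J0 i then rpow (a i) 2 else 0)).
  assert (HsR: 1 <= INR s) by (apply (le_INR 1); exact Hs).
  assert (HW: 0 < W).
  { assert (0 <= W) by (apply sumR_nonneg; intros; destruct (J0 i); [apply rpow_ge0|lra]).
    destruct H as [H|H]; [exact H|]. exfalso.
    pose proof (power_mean0 r J0 a q ltac:(lra) Ha0 (eq_sym H)). fold C in H0. lra. }
  assert (HPM: C <= INR s * rpow (W / INR s) (q/2)).
  { unfold C, W. rewrite <- Hsupp. apply power_mean; [lra| exact Ha0| rewrite Hsupp; lra| exact HW]. }
  destruct (top_exists n grp r p d J0 s) as [T [Tdom [Tcnt Ttop]]].
  set (D2 := sumR r (fun i => if J0 i || T i then rpow (a i) 2 else 0)).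
  assert (HWD: W <= D2).
  { apply sumR_le; intros i Hi. destruct (J0 i); simpl; [lra|]. destruct (T i); [apply rpow_ge0|lra]. }
  assert (Hphile: phi <= l2 m (matvec n A d) / gnormJ n grp r p 2 (fun i => J0 i || T i) d).
  { apply (proj1 Hphi). exists d, J0, T. split; [exists j0; auto|]. split; [lia|].
    split; [|split; [split; [exact Tdom| split; [exact Tcnt| exact Ttop]]| reflexivity]].
    unfold gnormJ. apply rpow_le; [left; apply Rinv_0_lt_compat; lra|]. split.
    - apply sumR_nonneg; intros; destruct (negb (J0 i)); [apply rpow_ge0|lra].
    - replace (sumR r (fun i => if negb (J0 i) then rpow (gnorm n grp p d i) q else 0)) with B.
      exact HBleC. apply sumR_ext; intros i Hi; destruct (J0 i); reflexivity. }
  assert (HD2: 0 < D2) by lra.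
  assert (Hsq: gnormJ n grp r p 2 (fun i => J0 i || T i) d = sqrt D2).
  { unfold gnormJ. apply rpow_half. lra. }
  assert (Hl2: l2 m (matvec n A d) = sqrt E) by reflexivity.
  rewrite Hsq, Hl2 in Hphile.
  assert (HsD: 0 < sqrt D2) by (apply sqrt_lt_R0; exact HD2).
  assert (Hph2: phi ^ 2 * D2 <= E).
  { assert (phi * sqrt D2 <= sqrt E).
    { apply (Rmult_le_compat_r (sqrt D2)) in Hphile; [|lra].
      replace (sqrt E / sqrt D2 * sqrt D2) with (sqrt E) in Hphile by (field; lra). exact Hphile. }
    assert (0 <= phi * sqrt D2) by nra.
    pose proof (pow_incr _ _ 2 (conj H0 H)). rewrite pow2_sqrt in H1 by exact HE0.
    replace ((phi * sqrt D2)^2) with (phi^2 * (sqrt D2)^2) in H1 by ring.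
    rewrite pow2_sqrt in H1 by lra. exact H1. }
  set (y := D2 / INR s).
  assert (Hy: 0 < y) by (unfold y; apply Rdiv_lt_0_compat; lra).
  assert (Hy1: phi ^ 2 * y <= lam * rpow y (q/2)).
  { assert (rpow (W / INR s) (q/2) <= rpow y (q/2)).
    { apply rpow_le; [lra|]. split. apply Rdiv_le_0_compat; lra. unfold y, Rdiv.
      apply Rmult_le_compat_r; [left; apply Rinv_0_lt_compat; lra| exact HWD]. }
    assert (E <= lam * C) by nra.
    assert (lam * C <= lam * (INR s * rpow (W / INR s) (q / 2))) by (apply Rmult_le_compat_l; lra).
    assert (lam * (INR s * rpow (W / INR s) (q / 2)) <= lam * (INR s * rpow y (q/2))).
    { apply Rmult_le_compat_l; [lra|]. apply Rmult_le_compat_l; lra. }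
    assert (Hk: phi^2 * D2 <= lam * (INR s * rpow y (q/2))) by lra.
    replace D2 with (INR s * y) in Hk by (unfold y; field; lra).
    apply (Rmult_le_reg_l (INR s)); [lra|]. lra. }
  assert (Hy2: rpow y (1 - q/2) <= lam / phi ^ 2).
  { assert (Ey: y = rpow y (q/2) * rpow y (1 - q/2)).
    { rewrite <- rpow_plus by exact Hy. replace (q/2 + (1 - q/2)) with 1 by ring. rewrite rpow_1; lra. }
    assert (0 < rpow y (q/2)) by (apply rpow_gt0; exact Hy).
    assert (0 < phi ^ 2) by (apply pow_lt; lra).
    assert (Hk: phi^2 * (rpow y (q/2) * rpow y (1-q/2)) <= lam * rpow y (q/2)) by (rewrite <- Ey; exact Hy1).
    apply (Rmult_le_reg_l (phi^2)); [lra|].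
    replace (phi ^ 2 * (lam / phi ^ 2)) with lam by (field; lra).
    apply (Rmult_le_reg_l (rpow y (q/2))); [lra|]. lra. }
  assert (HD2b: D2 <= INR s * (rpow lam (2/(2-q)) / rpow phi (4/(2-q)))).
  { assert (Hyb: y <= rpow (lam / phi^2) (2/(2-q))).
    { replace y with (rpow (rpow y (1 - q/2)) (2/(2-q))).
      apply rpow_le; [apply Rdiv_le_0_compat; lra|]. split; [apply rpow_ge0| exact Hy2].
      rewrite rpow_mult by lra. replace ((1 - q/2) * (2/(2-q))) with 1 by (field; lra). apply rpow_1; lra. }
    assert (Er: rpow (lam / phi^2) (2/(2-q)) = rpow lam (2/(2-q)) / rpow phi (4/(2-q))).
    { unfold Rdiv at 1. rewrite rpow_mul by (try apply Rlt_le, Rinv_0_lt_compat, pow_lt; lra).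
      rewrite rpow_inv by (apply pow_lt; lra). rewrite <- rpow_2 by lra. rewrite rpow_mult by lra.
      replace (2 * (2/(2-q))) with (4/(2-q)) by (field; lra). reflexivity. }
    rewrite Er in Hyb. replace D2 with (INR s * y) by (unfold y; field; lra).
    apply Rmult_le_compat_l; lra. }
  assert (Htail: sumR r (fun i => if J0 i || T i then 0 else rpow (a i) 2) <= W).
  { set (K := rpow (B / INR s) ((2-q)/q)).
    assert (HK0: 0 <= K) by apply rpow_ge0.
    apply Rle_trans with (sumR r (fun i => K * (if J0 i || T i then 0 else rpow (a i) q))).
    { apply sumR_le. intros i Hi. destruct (J0 i || T i) eqn:EJT; [lra|].
      apply orb_false_iff in EJT. destruct EJT as [EJ ET].
      assert (Hcnt: countb r T = s).
      { pose proof (gap_count r T J0 ltac:(intros i1 Hi1 HT1; apply (Tdom i1 HT1))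
           ltac:(exists i; auto)). rewrite Tcnt in *. lia. }
      assert (Hui: INR s * rpow (a i) q <= B).
      { rewrite <- Hcnt, <- sumR_count. apply Rle_trans with (sumR r (fun j => if T j then rpow (a j) q else 0)).
        - apply sumR_le; intros j Hj. destruct (T j) eqn:ETj; [|lra]. apply rpow_le; [lra|].
          split; [apply Ha0|]. apply Ttop; auto.
        - apply sumR_le; intros j Hj. destruct (T j) eqn:ETj.
          + rewrite (proj2 (Tdom j ETj)). lra.
          + destruct (J0 j); [lra| apply rpow_ge0]. }
      assert (Hui2: rpow (a i) q <= B / INR s).
      { apply (Rmult_le_reg_l (INR s)); [lra|]. replace (INR s * (B / INR s)) with B by (field; lra). exact Hui. }
      destruct (Ha0 i) as [Hpos|Hz].
      - replace (rpow (a i) 2) with (rpow (a i) q * rpow (rpow (a i) q) ((2-q)/q)).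
        + rewrite Rmult_comm. apply Rmult_le_compat_r; [apply rpow_ge0|].
          apply rpow_le; [apply Rdiv_le_0_compat; lra|]. split; [apply rpow_ge0| exact Hui2].
        + rewrite rpow_mult by lra. rewrite <- rpow_plus by exact Hpos. f_equal. field. lra.
      - rewrite <- Hz, !rpow_0. lra. }
    rewrite sumR_scal.
    apply Rle_trans with (K * B).
    { apply Rmult_le_compat_l; [exact HK0|]. apply sumR_le; intros i Hi.
      destruct (J0 i) eqn:EJ; simpl; [lra|]. destruct (T i); [apply rpow_ge0| lra]. }
    set (z := W / INR s). assert (Hz: 0 < z) by (unfold z; apply Rdiv_lt_0_compat; lra).
    assert (HBs: B / INR s <= rpow z (q/2)).
    { apply (Rmult_le_reg_l (INR s)); [lra|]. replace (INR s * (B / INR s)) with B by (field; lra). assert (C <= INR s * rpow z (q/2)) by exact HPM. lra. }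
    assert (HKz: K <= rpow z ((2-q)/2)).
    { unfold K. replace ((2-q)/2) with ((q/2) * ((2-q)/q)) by (field; lra).
      rewrite <- rpow_mult by lra. apply rpow_le; [apply Rdiv_le_0_compat; lra|].
      split; [apply Rdiv_le_0_compat; lra| exact HBs]. }
    assert (HBz: B <= INR s * rpow z (q/2)) by (assert (C <= INR s * rpow z (q/2)) by exact HPM; lra).
    apply Rle_trans with (rpow z ((2-q)/2) * (INR s * rpow z (q/2))).
    { apply Rmult_le_compat; try lra. }
    replace (rpow z ((2 - q) / 2) * (INR s * rpow z (q / 2))) with (INR s * rpow z ((2-q)/2 + q/2))
      by (rewrite rpow_plus by exact Hz; ring).
    replace ((2-q)/2 + q/2) with 1 by field. rewrite rpow_1 by lra. unfold z. right; field; lra. }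
  assert (Htot: sumR n (fun j => d j ^ 2) <= sumR r (fun i => rpow (a i) 2)).
  { rewrite (regroup n r grp _ Hgrp). apply sumR_le; intros i Hi.
    unfold a. rewrite gnorm_psum. apply l2_le_lp. exact Hp. }
  rewrite (sumR_split r (fun i => J0 i || T i)) in Htot. fold D2 in Htot.
  lra.
Qed.

Theorem theorem2p1 (m n r : nat) (grp : nat -> nat) (p q : R)
  (A : nat -> nat -> R) (xbar : nat -> R) (s K : nat) (lam phi : R)
  (Hgrp1 : forall j, (j < n)%nat -> (grp j < r)%nat)
  (Hgrp2 : forall i, (i < r)%nat -> exists j, (j < n)%nat /\ grp j = i)
  (Hq : 0 < q <= 1) (Hp : 1 <= p <= 2)
  (Hs : (1 <= s)%nat) (Hsupp : countb r (grp_nz n grp xbar) = s)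
  (Hphi : is_glb (phi_set m n grp r A p q s s) phi) (Hgrec : 0 < phi)
  (HK1 : (1 <= K)%nat) (HK2 : 1 <= 2 ^ (K - 1) * q)
  (HK3 : forall k : nat, (1 <= k)%nat -> (k < K)%nat -> 2 ^ (k - 1) * q < 1)
  (Hlam : 0 < lam) :
  let b := matvec n A xbar in
  let e := (q - 2) / q + (1 - / 2 ^ K) * (4 / (q * (2 - q))) in
  (2 ^ (K - 1) * q = 1 -> e = 1) /\
  (2 ^ (K - 1) * q > 1 -> e < (3 - q) / (2 - q)) /\
  forall xs : nat -> R,
    (l2 m (fun k => matvec n A xs k - b k)) ^ 2
      + lam * rpow (gnorm_full n grp r p q xs) q
      <= lam * rpow (gnorm_full n grp r p q xbar) q ->
    (l2 n (fun j => xs j - xbar j)) ^ 2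
      <= 2 * rpow lam (2 / (2 - q)) * rpow (INR s) e / rpow phi (4 / (2 - q)) /\
    (2 ^ (K - 1) * q = 1 ->
      (l2 n (fun j => xs j - xbar j)) ^ 2
        <= 2 / rpow phi (4 / (2 - q)) * (rpow lam (2 / (2 - q)) * INR s)) /\
    (2 ^ (K - 1) * q > 1 ->
      (l2 n (fun j => xs j - xbar j)) ^ 2
        <= 2 / rpow phi (4 / (2 - q))
           * (rpow lam (2 / (2 - q)) * rpow (INR s) ((3 - q) / (2 - q)))).
Proof.
  intros b e.
  set (u := 2 ^ (K - 1)) in *.
  assert (Hu: 0 < u) by (apply pow_lt; lra).
  assert (H2K: 2 ^ K = 2 * u) by (unfold u; destruct K; [lia| simpl; rewrite Nat.sub_0_r; ring]).
  assert (Ee: e = ((q-2)*(2-q) + 4 - 2 * / u) / (q*(2-q))).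
  { unfold e. rewrite H2K. field. repeat split; lra. }
  assert (Hdn: 0 < q * (2 - q)) by nra.
  assert (He1: u * q = 1 -> e = 1).
  { intro H. assert (/u = q) by (field_simplify_eq; lra). rewrite Ee, H0. field. lra. }
  assert (Hege1: 1 <= e).
  { assert (/u <= q).
    { apply (Rmult_le_reg_l u); [lra|]. rewrite Rinv_r by lra. lra. }
    rewrite Ee. apply (Rmult_le_reg_r (q*(2-q))); [lra|]. unfold Rdiv.
    rewrite Rmult_assoc, Rinv_l by lra. lra. }
  assert (He2: u * q > 1 -> e < (3 - q) / (2 - q)).
  { intro H. assert (HK2': (2 <= K)%nat).
    { destruct (Nat.eq_dec K 1); [|lia]. subst K. unfold u in H. simpl in H. lra. }
    pose proof (HK3 (K-1)%nat ltac:(lia) ltac:(lia)) as H3.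
    set (t := 2 ^ (K - 1 - 1)) in *.
    assert (Hut: u = 2 * t) by (unfold u, t; destruct K as [|[|K']]; [lia|lia|]; simpl; rewrite Nat.sub_0_r; ring).
    assert (Ht: 0 < t) by (apply pow_lt; lra).
    assert (q < / t).
    { apply (Rmult_lt_reg_l t); [lra|]. rewrite Rinv_r by lra. lra. }
    assert (2 * / u = / t) by (rewrite Hut; field; lra).
    rewrite Ee. apply (Rmult_lt_reg_r (q*(2-q))); [lra|]. unfold Rdiv.
    rewrite Rmult_assoc, Rinv_l by lra.
    replace ((3 - q) * / (2 - q) * (q * (2 - q))) with (q * (3 - q)) by (field; lra). nra. }
  split; [exact He1| split; [exact He2|]].
  intros xs Hlev.
  pose proof (core m n r grp p q A xbar s lam phi xs Hgrp1 Hq Hp Hs Hsupp Hphi Hgrec Hlam Hlev) as Hc.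
  set (L := l2 n (fun j => xs j - xbar j) ^ 2) in *.
  set (Rl := rpow lam (2 / (2 - q))) in *. set (Pp := rpow phi (4 / (2 - q))) in *.
  assert (HPp: 0 < Pp) by (apply rpow_gt0; lra).
  assert (HRl: 0 <= Rl) by apply rpow_ge0.
  assert (HsR: 1 <= INR s) by (apply (le_INR 1); exact Hs).
  assert (Hse: INR s <= rpow (INR s) e).
  { rewrite <- (rpow_1 (INR s)) at 1 by lra. apply rpow_exp_le; lra. }
  assert (HRP: 0 <= Rl / Pp) by (apply Rdiv_le_0_compat; lra).
  split; [|split].
  - replace (2 * Rl * rpow (INR s) e / Pp) with (2 * (rpow (INR s) e * (Rl / Pp))) by (field; lra).
    apply Rle_trans with (1 := Hc). apply Rmult_le_compat_l; [lra|].
    apply Rmult_le_compat_r; lra.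
  - intro H. replace (2 / Pp * (Rl * INR s)) with (2 * (INR s * (Rl / Pp))) by (field; lra). exact Hc.
  - intro H. pose proof (He2 H).
    assert (INR s <= rpow (INR s) ((3 - q) / (2 - q))).
    { eapply Rle_trans; [exact Hse|]. apply rpow_exp_le; lra. }
    replace (2 / Pp * (Rl * rpow (INR s) ((3 - q) / (2 - q)))) with
      (2 * (rpow (INR s) ((3 - q) / (2 - q)) * (Rl / Pp))) by (field; lra).
    apply Rle_trans with (1 := Hc). apply Rmult_le_compat_l; [lra|].
    apply Rmult_le_compat_r; lra.
Qed.
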